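(* Let $\varepsilon>0$ and $r_c>0$, and let $\mathbf{X}=(x_1,x_2,x_3):(0,S)\times[0,T_* )\to\mathbb{R}^3$ be a smooth solution of $$\mathbf{X}_t = \frac{\mathbf{X}_s \wedge \mathbf{X}_{ss}}{|\mathbf{X}_s|^3} - \frac{\varepsilon\, x_1}{x_1^2 + r_c^2}\, \frac{\mathbf{X}_s\wedge \mathbf{e}_1 }{|\mathbf{X}_s|}$$ with $\mathbf{X}_s(s,t)\neq 0$ for all $(s,t)$. Then there is a function $L_0$ of $s$ alone (determined by the initial data) such that the modulus of the tangential vector $\mathbf{T}=\mathbf{X}_s$ satisfies $$|\mathbf{T}(s,t)| = L_0(s)\,\bigl(x_1^2(s,t) + r_c^2\bigr)^{-\varepsilon/2}\quad\text{for all }(s,t).$$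
   Context: $\mathbf{e}_1=(1,0,0)$, $\wedge$ denotes the cross product in $\mathbb{R}^3$, subscripts $s,t$ denote partial derivatives. The equation models a vortex filament $\mathbf{X}$ interacting with its mirror image in the plane $x_1=0$ (antiparallel vortex pair), with interaction strength $\varepsilon$ and regularization parameter $r_c$. *)

(* Defs.v *)
From Stdlib Require Import Reals.
Open Scope R_scope.

Definition vec3 : Type := (R * R * R)%type.

Definition v1 (u : vec3) : R := fst (fst u).
Definition v2 (u : vec3) : R := snd (fst u).
Definition v3 (u : vec3) : R := snd u.

Definition e1 : vec3 := (1, 0, 0).

Definition cross (u w : vec3) : vec3 :=
  (v2 u * v3 w - v3 u * v2 w,
   v3 u * v1 w - v1 u * v3 w,
   v1 u * v2 w - v2 u * v1 w).

Definition norm3 (u : vec3) : R := sqrt (v1 u ^ 2 + v2 u ^ 2 + v3 u ^ 2).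

Definition scal3 (k : R) (u : vec3) : vec3 := (k * v1 u, k * v2 u, k * v3 u).

Definition sub3 (u w : vec3) : vec3 := (v1 u - v1 w, v2 u - v2 w, v3 u - v3 w).

(** For an open interval this is the
    usual derivative; at an endpoint of a half-open interval it is the
    one-sided derivative. *)
Definition has_deriv_in (D : R -> Prop) (g : R -> R) (x l : R) : Prop :=
  forall eps : R, 0 < eps -> exists delta : R, 0 < delta /\
    forall y : R, D y -> y <> x -> Rabs (y - x) < delta ->
      Rabs ((g y - g x) / (y - x) - l) < eps.

Definition cont_on2 (U : R -> R -> Prop) (f : R -> R -> R) : Prop :=
  forall s t : R, U s t -> forall eps : R, 0 < eps -> exists delta : R, 0 < delta /\
    forall s' t' : R, U s' t' -> Rabs (s' - s) < delta -> Rabs (t' - t) < delta ->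
      Rabs (f s' t' - f s t) < eps.

Definition is_pd_s (U : R -> R -> Prop) (f g : R -> R -> R) : Prop :=
  forall s t : R, U s t -> has_deriv_in (fun s' => U s' t) (fun s' => f s' t) s (g s t).
Definition is_pd_t (U : R -> R -> Prop) (f g : R -> R -> R) : Prop :=
  forall s t : R, U s t -> has_deriv_in (fun t' => U s t') (fun t' => f s t') t (g s t).

(** C^infinity on U: f lies in a family of functions, each continuous on U,
    closed under taking both partial derivatives (so all iterated partial
    derivatives exist and are continuous on U). *)
Definition smooth_on (U : R -> R -> Prop) (f : R -> R -> R) : Prop :=
  exists F : (R -> R -> R) -> Prop, F f /\
    forall g, F g ->
      cont_on2 U g /\
      (exists gs, F gs /\ is_pd_s U g gs) /\
      (exists gt, F gt /\ is_pd_t U g gt).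

Definition comp1 (X : R -> R -> vec3) : R -> R -> R := fun s t => v1 (X s t).
Definition comp2 (X : R -> R -> vec3) : R -> R -> R := fun s t => v2 (X s t).
Definition comp3 (X : R -> R -> vec3) : R -> R -> R := fun s t => v3 (X s t).

Definition smooth3_on (U : R -> R -> Prop) (X : R -> R -> vec3) : Prop :=
  smooth_on U (comp1 X) /\ smooth_on U (comp2 X) /\ smooth_on U (comp3 X).

Definition is_pd3_s (U : R -> R -> Prop) (X Y : R -> R -> vec3) : Prop :=
  is_pd_s U (comp1 X) (comp1 Y) /\ is_pd_s U (comp2 X) (comp2 Y) /\
  is_pd_s U (comp3 X) (comp3 Y).
Definition is_pd3_t (U : R -> R -> Prop) (X Y : R -> R -> vec3) : Prop :=
  is_pd_t U (comp1 X) (comp1 Y) /\ is_pd_t U (comp2 X) (comp2 Y) /\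
  is_pd_t U (comp3 X) (comp3 Y).

Definition dom (Smax Tstar : R) : R -> R -> Prop :=
  fun s t => 0 < s < Smax /\ 0 <= t < Tstar.

(* Main.v *)
Require Import Defs.
From Stdlib Require Import Reals Lra.
Open Scope R_scope.

Lemma conv_deriv (D : R -> Prop) g x l r :
  has_deriv_in D g x l -> 0 < r -> (forall y, Rabs (y - x) < r -> D y) ->
  derivable_pt_lim g x l.
Proof.
  intros H Hr HD e He. destruct (H e He) as [d [Hd Hy]].
  assert (Hm : 0 < Rmin d r) by (apply Rmin_glb_lt; lra).
  exists (mkposreal _ Hm). intros h Hh Hhd. simpl in Hhd.
  assert (E : x + h - x = h) by ring.
  pose proof (Rmin_l d r). pose proof (Rmin_r d r).
  specialize (Hy (x + h)). rewrite E in Hy. apply Hy.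
  - apply HD. rewrite E. lra.
  - intro C. apply Hh. lra.
  - lra.
Qed.

Lemma loc_eq f g x l r :
  derivable_pt_lim f x l -> 0 < r -> (forall y, Rabs (y - x) < r -> f y = g y) ->
  derivable_pt_lim g x l.
Proof.
  intros H Hr E e He. destruct (H e He) as [d Hd].
  assert (Hm : 0 < Rmin d r) by (apply Rmin_glb_lt; [apply cond_pos|lra]).
  exists (mkposreal _ Hm). intros h Hh Hhd. simpl in Hhd.
  pose proof (Rmin_l d r). pose proof (Rmin_r d r).
  rewrite <- (E (x + h)), <- (E x).
  - apply Hd; auto. lra.
  - rewrite Rminus_eq_0, Rabs_R0; lra.
  - replace (x + h - x) with h by ring. lra.
Qed.

Lemma zero_eps x : (forall e, 0 < e -> Rabs x < e) -> x = 0.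
Proof.
  intros H. destruct (Req_dec x 0) as [|n]; auto.
  pose proof (Rabs_pos_lt x n). specialize (H _ H0). lra.
Qed.

Lemma schwarz (a b c d : R) (f fs ft fst fts : R -> R -> R) s0 t0 :
  a < s0 < b -> c < t0 < d ->
  (forall s t, a < s < b -> c < t < d -> derivable_pt_lim (fun x => f x t) s (fs s t)) ->
  (forall s t, a < s < b -> c < t < d -> derivable_pt_lim (fun y => fs s y) t (fst s t)) ->
  (forall s t, a < s < b -> c < t < d -> derivable_pt_lim (fun y => f s y) t (ft s t)) ->
  (forall s t, a < s < b -> c < t < d -> derivable_pt_lim (fun x => ft x t) s (fts s t)) ->
  (forall e, 0 < e -> exists dl, 0 < dl /\ forall s t, a < s < b -> c < t < d ->
      Rabs (s - s0) < dl -> Rabs (t - t0) < dl -> Rabs (fst s t - fst s0 t0) < e) ->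
  (forall e, 0 < e -> exists dl, 0 < dl /\ forall s t, a < s < b -> c < t < d ->
      Rabs (s - s0) < dl -> Rabs (t - t0) < dl -> Rabs (fts s t - fts s0 t0) < e) ->
  fst s0 t0 = fts s0 t0.
Proof.
  intros Hs0 Ht0 H1 H2 H3 H4 C1 C2.
  apply Rminus_diag_uniq. apply zero_eps. intros e He.
  destruct (C1 (e/2)) as [d1 [Hd1 K1]]; [lra|].
  destruct (C2 (e/2)) as [d2 [Hd2 K2]]; [lra|].
  set (eta := Rmin (Rmin (d1/2) (d2/2)) (Rmin ((b-s0)/2) ((d-t0)/2))).
  assert (Heta : 0 < eta) by (unfold eta; repeat apply Rmin_glb_lt; lra).
  assert (E1 : eta <= d1/2) by (unfold eta; eapply Rle_trans; [apply Rmin_l|apply Rmin_l]).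
  assert (E2 : eta <= d2/2) by (unfold eta; eapply Rle_trans; [apply Rmin_l|apply Rmin_r]).
  assert (E3 : eta <= (b-s0)/2) by (unfold eta; eapply Rle_trans; [apply Rmin_r|apply Rmin_l]).
  assert (E4 : eta <= (d-t0)/2) by (unfold eta; eapply Rle_trans; [apply Rmin_r|apply Rmin_r]).
  destruct (MVT_cor2 (fun x => f x (t0+eta) - f x t0) (fun x => fs x (t0+eta) - fs x t0) s0 (s0+eta))
    as [s1 [M1 R1]]; [lra| |].
  { intros x Hx. exact (derivable_pt_lim_minus _ _ _ _ _ (H1 x (t0+eta) ltac:(lra) ltac:(lra)) (H1 x t0 ltac:(lra) ltac:(lra))). }
  destruct (MVT_cor2 (fun y => fs s1 y) (fun y => fst s1 y) t0 (t0+eta)) as [t1 [M2 R2]]; [lra| |].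
  { intros y Hy. apply H2; lra. }
  destruct (MVT_cor2 (fun y => f (s0+eta) y - f s0 y) (fun y => ft (s0+eta) y - ft s0 y) t0 (t0+eta))
    as [t2 [M3 R3]]; [lra| |].
  { intros y Hy. exact (derivable_pt_lim_minus _ _ _ _ _ (H3 (s0+eta) y ltac:(lra) ltac:(lra)) (H3 s0 y ltac:(lra) ltac:(lra))). }
  destruct (MVT_cor2 (fun x => ft x t2) (fun x => fts x t2) s0 (s0+eta)) as [s2 [M4 R4]]; [lra| |].
  { intros x Hx. apply H4; lra. }
  simpl in M1, M2, M3, M4.
  assert (Eq : fst s1 t1 = fts s2 t2).
  { apply (Rmult_eq_reg_l (eta * eta)); [|nra].
    replace (s0 + eta - s0) with eta in M1, M4 by ring.
    replace (t0 + eta - t0) with eta in M2, M3 by ring.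
    rewrite M2 in M1. rewrite M4 in M3. nra. }
  assert (A1 := K1 s1 t1 ltac:(lra) ltac:(lra) ltac:(rewrite Rabs_right; lra) ltac:(rewrite Rabs_right; lra)).
  assert (A2 := K2 s2 t2 ltac:(lra) ltac:(lra) ltac:(rewrite Rabs_right; lra) ltac:(rewrite Rabs_right; lra)).
  rewrite Eq in A1. revert A1 A2. unfold Rabs. repeat destruct Rcase_abs; lra.
Qed.

Lemma slice_s S Tstar s t : 0 < s < S -> 0 <= t < Tstar ->
  forall y, Rabs (y - s) < Rmin s (S - s) -> dom S Tstar y t.
Proof.
  intros Hs Ht y Hy. pose proof (Rmin_l s (S-s)). pose proof (Rmin_r s (S-s)).
  unfold dom. revert Hy. unfold Rabs. destruct Rcase_abs; intros; lra.
Qed.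

Lemma slice_t S Tstar s t : 0 < s < S -> 0 < t < Tstar ->
  forall y, Rabs (y - t) < Rmin t (Tstar - t) -> dom S Tstar s y.
Proof.
  intros Hs Ht y Hy. pose proof (Rmin_l t (Tstar-t)). pose proof (Rmin_r t (Tstar-t)).
  unfold dom. revert Hy. unfold Rabs. destruct Rcase_abs; intros; lra.
Qed.

Lemma rmin_pos a b : 0 < a -> 0 < b -> 0 < Rmin a b.
Proof. intros; apply Rmin_glb_lt; auto. Qed.

Lemma comp_lemma S Tstar f fs ft :
  smooth_on (dom S Tstar) f -> is_pd_s (dom S Tstar) f fs -> is_pd_t (dom S Tstar) f ft ->
  exists fst fts : R -> R -> R,
  (forall s t, 0 < s < S -> 0 < t < Tstar -> derivable_pt_lim (fun y => fs s y) t (fst s t)) /\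
  (forall s t, 0 < s < S -> 0 < t < Tstar -> derivable_pt_lim (fun x => ft x t) s (fts s t)) /\
  (forall s t, 0 < s < S -> 0 < t < Tstar -> fst s t = fts s t) /\
  cont_on2 (dom S Tstar) fs.
Proof.
  intros [F [Ff HF]] Pfs Pft.
  destruct (HF f Ff) as [_ [[gs [Fgs Pgs]] [gt [Fgt Pgt]]]].
  destruct (HF gs Fgs) as [Cgs [_ [gst [Fgst Pgst]]]].
  destruct (HF gt Fgt) as [_ [[gts [Fgts Pgts]] _]].
  destruct (HF gst Fgst) as [Cgst _]. destruct (HF gts Fgts) as [Cgts _].
  assert (Ds : forall g gg s t, is_pd_s (dom S Tstar) g gg -> 0 < s < S -> 0 <= t < Tstar ->
            derivable_pt_lim (fun x => g x t) s (gg s t)).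
  { intros g gg s t P Hs Ht. eapply conv_deriv. apply P. split; auto.
    apply (rmin_pos s (S - s)); lra. apply slice_s; auto. }
  assert (Dt : forall g gg s t, is_pd_t (dom S Tstar) g gg -> 0 < s < S -> 0 < t < Tstar ->
            derivable_pt_lim (fun y => g s y) t (gg s t)).
  { intros g gg s t P Hs Ht. eapply conv_deriv. apply P. split; auto; lra.
    apply (rmin_pos t (Tstar - t)); lra. apply slice_t; auto. }
  assert (Egs : forall s t, dom S Tstar s t -> gs s t = fs s t).
  { intros s t [Hs Ht]. eapply uniqueness_limite; [apply (Ds _ _ s t Pgs)|apply (Ds _ _ s t Pfs)]; auto. }
  assert (Egt : forall s t, 0 < s < S -> 0 < t < Tstar -> gt s t = ft s t).
  { intros s t Hs Ht. eapply uniqueness_limite; [apply (Dt _ _ s t Pgt)|apply (Dt _ _ s t Pft)]; auto. }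
  exists gst, gts. split; [|split; [|split]].
  - intros s t Hs Ht. eapply loc_eq. apply (Dt _ _ s t Pgst); auto.
    apply (rmin_pos t (Tstar - t)); lra.
    intros y Hy. apply Egs. apply (slice_t S Tstar s t); auto.
  - intros s t Hs Ht. eapply loc_eq. apply (Ds _ _ s t Pgts); auto; lra.
    apply (rmin_pos s (S - s)); lra.
    intros y Hy. apply Egt; auto. pose proof (slice_s S Tstar s t Hs ltac:(lra) y Hy) as [A _]; auto.
  - intros s0 t0 Hs0 Ht0. apply (schwarz 0 S 0 Tstar f gs gt gst gts s0 t0); [lra|lra| | | | | |].
    + intros s t Hs Ht. apply (Ds f gs); auto; lra.
    + intros s t Hs Ht. apply (Dt gs gst); auto.
    + intros s t Hs Ht. apply (Dt f gt); auto.
    + intros s t Hs Ht. apply (Ds gt gts); auto; lra.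
    + intros e He. destruct (Cgst s0 t0 ltac:(split; lra) e He) as [dl [Hdl K]].
      exists dl; split; auto. intros s t Hs Ht. apply K. split; lra.
    + intros e He. destruct (Cgts s0 t0 ltac:(split; lra) e He) as [dl [Hdl K]].
      exists dl; split; auto. intros s t Hs Ht. apply K. split; lra.
  - intros s t Hst e He. destruct (Cgs s t Hst e He) as [dl [Hdl K]].
    exists dl; split; auto. intros s' t' H' A B. rewrite <- (Egs s t Hst), <- (Egs s' t' H'). auto.
Qed.

Lemma cont_pt_intro f x :
  (forall e, 0 < e -> exists d, 0 < d /\ forall y, Rabs (y - x) < d -> Rabs (f y - f x) < e) ->
  continuity_pt f x.
Proof.
  intros H e He. destruct (H e He) as [d [Hd K]]. exists d. split; auto.
  intros y [_ Hy]. simpl in *. unfold R_dist in *. auto.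
Qed.

Lemma cont_pt_elim f x : continuity_pt f x ->
  forall e, 0 < e -> exists d, 0 < d /\ forall y, Rabs (y - x) < d -> Rabs (f y - f x) < e.
Proof.
  intros H e He. destruct (H e He) as [d [Hd K]]. exists d. split; auto.
  intros y Hy. destruct (Req_dec x y) as [<-|n].
  - rewrite Rminus_diag, Rabs_R0; auto.
  - apply (K y). split. split; [exact I|auto]. simpl. unfold R_dist. auto.
Qed.

Lemma clamp_cont S Tstar g s : cont_on2 (dom S Tstar) g -> 0 < s < S -> 0 < Tstar ->
  continuity_pt (fun y => g s (Rmax 0 y)) 0.
Proof.
  intros C Hs HT. apply cont_pt_intro. intros e He.
  destruct (C s 0 ltac:(split; lra) e He) as [d [Hd K]].
  exists (Rmin d Tstar). split. apply Rmin_glb_lt; lra.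
  intros y Hy. pose proof (Rmin_l d Tstar). pose proof (Rmin_r d Tstar).
  assert (E0 : Rmax 0 0 = 0) by (apply Rmax_left; lra). rewrite E0.
  assert (A : 0 <= Rmax 0 y <= Rabs (y - 0)).
  { unfold Rmax, Rabs. destruct Rle_dec; destruct Rcase_abs; lra. }
  apply K. split; lra. rewrite Rminus_diag, Rabs_R0; lra. rewrite Rabs_right; lra.
Qed.

Lemma dot_zero (T Y : vec3) a b :
  v1 T * v1 (sub3 (scal3 a (cross T Y)) (scal3 b (cross T e1))) +
  v2 T * v2 (sub3 (scal3 a (cross T Y)) (scal3 b (cross T e1))) +
  v3 T * v3 (sub3 (scal3 a (cross T Y)) (scal3 b (cross T e1))) = 0.
Proof. destruct T as [[t1 t2] t3]; destruct Y as [[y1 y2] y3]; unfold sub3, scal3, cross, e1, v1, v2, v3; simpl; ring. Qed.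

Lemma alg (T Y : vec3) x rc eps n D1 D2 D3 E :
  n <> 0 -> x ^ 2 + rc ^ 2 <> 0 ->
  let Z := sub3 (scal3 (/ n ^ 3) (cross T Y)) (scal3 (eps * x / (x ^ 2 + rc ^ 2) / n) (cross T e1)) in
  v1 T * D1 + v2 T * D2 + v3 T * D3 = - (v1 Y * v1 Z + v2 Y * v2 Z + v3 Y * v3 Z) ->
  2 * (v1 T * D1 + v2 T * D2 + v3 T * D3) * E + n * n * (eps * (E / (x ^ 2 + rc ^ 2)) * (2 * x * v1 Z)) = 0.
Proof.
  intros Hn HQ Z K. rewrite K. unfold Z.
  destruct T as [[t1 t2] t3]; destruct Y as [[y1 y2] y3]; unfold sub3, scal3, cross, e1, v1, v2, v3; simpl.
  field. split; [replace (x*x+rc*rc) with (x^2+rc^2) by ring|]; auto.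
Qed.

Lemma fin (u0 u1 : vec3) q0 q1 eps : 0 < q0 -> 0 < q1 ->
  (v1 u1 * v1 u1 + v2 u1 * v2 u1 + v3 u1 * v3 u1) * Rpower q1 eps =
  (v1 u0 * v1 u0 + v2 u0 * v2 u0 + v3 u0 * v3 u0) * Rpower q0 eps ->
  norm3 u1 = norm3 u0 * Rpower q0 (eps / 2) * Rpower q1 (- (eps / 2)).
Proof.
  intros H0 H1 E.
  assert (Hs : forall q, 0 < q -> sqrt (Rpower q eps) = Rpower q (eps / 2)).
  { intros q Hq. rewrite <- Rpower_sqrt. rewrite Rpower_mult. reflexivity.
    unfold Rpower. apply exp_pos. }
  assert (Hn : forall u : vec3, norm3 u = sqrt (v1 u * v1 u + v2 u * v2 u + v3 u * v3 u)).
  { intros u. unfold norm3. f_equal. ring. }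
  assert (Hp : forall u : vec3, 0 <= v1 u * v1 u + v2 u * v2 u + v3 u * v3 u).
  { intros u. nra. }
  assert (Hr : forall q, 0 <= Rpower q eps) by (intros; unfold Rpower; left; apply exp_pos).
  apply (f_equal sqrt) in E. rewrite !sqrt_mult in E by auto.
  rewrite !Hs in E by auto. rewrite !Hn. rewrite <- E. rewrite Rpower_Ropp.
  assert (0 < Rpower q1 (eps / 2)) by (unfold Rpower; apply exp_pos).
  field. lra.
Qed.

Theorem mainTheorem1
  (eps rc S Tstar : R) (heps : 0 < eps) (hrc : 0 < rc)
  (X Xs Xss Xt : R -> R -> vec3)
  (hsmooth : smooth3_on (dom S Tstar) X)
  (hXs : is_pd3_s (dom S Tstar) X Xs)
  (hXss : is_pd3_s (dom S Tstar) Xs Xss)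
  (hXt : is_pd3_t (dom S Tstar) X Xt)
  (hnz : forall s t, dom S Tstar s t -> Xs s t <> (0, 0, 0))
  (heq : forall s t, dom S Tstar s t ->
     Xt s t =
       sub3 (scal3 (/ (norm3 (Xs s t) ^ 3)) (cross (Xs s t) (Xss s t)))
            (scal3 (eps * v1 (X s t) / (v1 (X s t) ^ 2 + rc ^ 2) / norm3 (Xs s t))
                   (cross (Xs s t) e1))) :
  exists L0 : R -> R,
    (forall s, 0 < s < S ->
       L0 s = norm3 (Xs s 0) * Rpower (v1 (X s 0) ^ 2 + rc ^ 2) (eps / 2)) /\
    (forall s t, dom S Tstar s t ->
       norm3 (Xs s t) = L0 s * Rpower (v1 (X s t) ^ 2 + rc ^ 2) (- (eps / 2))).
Proof.
  destruct hsmooth as [Sm1 [Sm2 Sm3]].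
  destruct hXs as [Ps1 [Ps2 Ps3]]. destruct hXss as [Pss1 [Pss2 Pss3]].
  destruct hXt as [Pt1 [Pt2 Pt3]].
  pose proof Sm1 as [F [Ff HF]]. destruct (HF _ Ff) as [Cx _].
  destruct (comp_lemma _ _ _ _ _ Sm1 Ps1 Pt1) as [d1 [f1 [A1 [B1 [C1 Co1]]]]].
  destruct (comp_lemma _ _ _ _ _ Sm2 Ps2 Pt2) as [d2 [f2 [A2 [B2 [C2 Co2]]]]].
  destruct (comp_lemma _ _ _ _ _ Sm3 Ps3 Pt3) as [d3 [f3 [A3 [B3 [C3 Co3]]]]].
  exists (fun s => norm3 (Xs s 0) * Rpower (v1 (X s 0) ^ 2 + rc ^ 2) (eps / 2)).
  split; [intros; reflexivity|].
  intros s t [Hs Ht].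
  set (G := fun y => (v1 (Xs s y) * v1 (Xs s y) + v2 (Xs s y) * v2 (Xs s y) + v3 (Xs s y) * v3 (Xs s y))
                     * Rpower (v1 (X s y) * v1 (X s y) + rc * rc) eps).
  assert (HD : forall y, 0 < y < Tstar -> derivable_pt_lim G y 0).
  { intros y Hy.
    assert (Hdy : dom S Tstar s y) by (split; lra).
    assert (K : v1 (Xs s y) * f1 s y + v2 (Xs s y) * f2 s y + v3 (Xs s y) * f3 s y =
                - (v1 (Xss s y) * v1 (Xt s y) + v2 (Xss s y) * v2 (Xt s y) + v3 (Xss s y) * v3 (Xt s y))).
    { assert (Hr : 0 < Rmin s (S - s)) by (apply rmin_pos; lra).
      pose proof (conv_deriv _ _ _ _ _ (Pss1 s y Hdy) Hr (slice_s S Tstar s y Hs ltac:(lra))) as b1.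
      pose proof (conv_deriv _ _ _ _ _ (Pss2 s y Hdy) Hr (slice_s S Tstar s y Hs ltac:(lra))) as b2.
      pose proof (conv_deriv _ _ _ _ _ (Pss3 s y Hdy) Hr (slice_s S Tstar s y Hs ltac:(lra))) as b3.
      pose proof (B1 s y Hs Hy) as c1. pose proof (B2 s y Hs Hy) as c2. pose proof (B3 s y Hs Hy) as c3.
      pose proof (derivable_pt_lim_plus _ _ _ _ _ (derivable_pt_lim_plus _ _ _ _ _
         (derivable_pt_lim_mult _ _ _ _ _ b1 c1) (derivable_pt_lim_mult _ _ _ _ _ b2 c2))
         (derivable_pt_lim_mult _ _ _ _ _ b3 c3)) as DP.
      match type of DP with derivable_pt_lim ?g _ _ =>
        assert (Heq : forall z, Rabs (z - s) < Rmin s (S - s) -> fct_cte 0 z = g z) end.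
      { intros z Hz. pose proof (slice_s S Tstar s y Hs ltac:(lra) z Hz) as Hz'.
        unfold fct_cte, plus_fct, mult_fct, comp1, comp2, comp3. rewrite (heq z y Hz').
        rewrite dot_zero. reflexivity. }
      pose proof (uniqueness_limite _ _ _ _ DP (loc_eq _ _ _ _ _ (derivable_pt_lim_const 0 s) Hr Heq)) as Ku.
      unfold comp1, comp2, comp3 in Ku. cbv beta in Ku. lra. }
    assert (Hr : 0 < Rmin y (Tstar - y)) by (apply rmin_pos; lra).
    pose proof (conv_deriv _ _ _ _ _ (Pt1 s y Hdy) Hr (slice_t S Tstar s y Hs Hy)) as xd.
    pose proof (A1 s y Hs Hy) as a1. pose proof (A2 s y Hs Hy) as a2. pose proof (A3 s y Hs Hy) as a3.
    pose proof (derivable_pt_lim_plus _ _ _ _ _ (derivable_pt_lim_plus _ _ _ _ _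
         (derivable_pt_lim_mult _ _ _ _ _ a1 a1) (derivable_pt_lim_mult _ _ _ _ _ a2 a2))
         (derivable_pt_lim_mult _ _ _ _ _ a3 a3)) as DN.
    pose proof (derivable_pt_lim_plus _ _ _ _ _ (derivable_pt_lim_mult _ _ _ _ _ xd xd)
                   (derivable_pt_lim_const (rc * rc) y)) as DQ.
    assert (Qpos : 0 < v1 (X s y) * v1 (X s y) + rc * rc) by nra.
    pose proof (derivable_pt_lim_comp _ _ _ _ _ DQ (derivable_pt_lim_power _ eps Qpos)) as DR.
    pose proof (derivable_pt_lim_mult _ _ _ _ _ DN DR) as DG.
    match type of DG with derivable_pt_lim _ _ ?l => replace 0 with l; [exact DG|] end.
    unfold comp1, comp2, comp3, plus_fct, mult_fct, fct_cte, comp. cbv beta.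
    rewrite (C1 s y Hs Hy), (C2 s y Hs Hy), (C3 s y Hs Hy).
    rewrite (heq s y Hdy) in K |- *.
    assert (HQ : v1 (X s y) * v1 (X s y) + rc * rc = v1 (X s y) ^ 2 + rc ^ 2) by ring.
    rewrite HQ in *.
    assert (Epm : Rpower (v1 (X s y) ^ 2 + rc ^ 2) (eps - 1) =
                  Rpower (v1 (X s y) ^ 2 + rc ^ 2) eps / (v1 (X s y) ^ 2 + rc ^ 2)).
    { unfold Rminus. rewrite Rpower_plus, Rpower_Ropp, Rpower_1 by lra. reflexivity. }
    rewrite Epm.
    assert (Hn : norm3 (Xs s y) <> 0).
    { intro E0. apply (hnz s y Hdy). unfold norm3 in E0. apply sqrt_eq_0 in E0; [|nra].
      destruct (Xs s y) as [[u1 u2] u3]. unfold v1, v2, v3 in E0; simpl in E0.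
      f_equal; [f_equal|]; nra. }
    assert (Nn : norm3 (Xs s y) * norm3 (Xs s y) =
                 v1 (Xs s y) * v1 (Xs s y) + v2 (Xs s y) * v2 (Xs s y) + v3 (Xs s y) * v3 (Xs s y)).
    { unfold norm3. rewrite sqrt_sqrt by nra. ring. }
    pose proof (alg (Xs s y) (Xss s y) (v1 (X s y)) rc eps (norm3 (Xs s y)) (f1 s y) (f2 s y) (f3 s y)
                  (Rpower (v1 (X s y) ^ 2 + rc ^ 2) eps) Hn ltac:(lra) K) as AL.
    rewrite Nn in AL. etransitivity; [|exact AL]. ring. }
  assert (Gc : forall y1 y2, 0 < y1 < Tstar -> 0 < y2 < Tstar -> y1 < y2 -> G y1 = G y2).
  { intros y1 y2 H1' H2' H12.
    destruct (MVT_cor2 G (fun _ => 0) y1 y2 H12) as [c [Mc _]].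
    - intros c Hc. apply HD. lra.
    - lra. }
  assert (G0 : 0 < t -> G 0 = G t).
  { intros Htp.
    assert (HT : 0 < Tstar) by lra.
    pose proof (clamp_cont _ _ _ s Co1 Hs HT) as k1.
    pose proof (clamp_cont _ _ _ s Co2 Hs HT) as k2.
    pose proof (clamp_cont _ _ _ s Co3 Hs HT) as k3.
    pose proof (clamp_cont _ _ _ s Cx Hs HT) as kx.
    pose proof (continuity_pt_plus _ _ _ (continuity_pt_plus _ _ _
       (continuity_pt_mult _ _ _ k1 k1) (continuity_pt_mult _ _ _ k2 k2))
       (continuity_pt_mult _ _ _ k3 k3)) as CN.
    pose proof (continuity_pt_plus _ _ _ (continuity_pt_mult _ _ _ kx kx)
       (continuity_pt_const (fct_cte (rc * rc)) 0 (fun a b => eq_refl))) as CQ.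
    assert (Qpos : 0 < v1 (X s (Rmax 0 0)) * v1 (X s (Rmax 0 0)) + rc * rc) by nra.
    pose proof (continuity_pt_comp _ _ 0 CQ (derivable_continuous_pt _ _
        (exist _ _ (derivable_pt_lim_power _ eps Qpos)))) as CR.
    pose proof (continuity_pt_mult _ _ _ CN CR) as CG.
    match type of CG with continuity_pt ?g _ =>
      assert (Eg : forall z, 0 <= z -> g z = G z) end.
    { intros z Hz. unfold comp1, comp2, comp3, plus_fct, mult_fct, fct_cte, comp, G.
      rewrite (Rmax_right 0 z Hz). reflexivity. }
    pose proof (cont_pt_elim _ _ CG) as CE.
    rewrite <- (Eg 0 (Rle_refl 0)).
    symmetry. apply Rminus_diag_uniq. apply zero_eps. intros e He.
    destruct (CE e He) as [dl [Hdl Kd]].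
    set (z := Rmin (dl / 2) (t / 2)).
    assert (Hz : 0 < z) by (apply rmin_pos; lra).
    pose proof (Rmin_l (dl/2) (t/2)). pose proof (Rmin_r (dl/2) (t/2)).
    specialize (Kd z ltac:(rewrite Rminus_0_r, Rabs_right; unfold z in *; lra)).
    rewrite (Eg z) in Kd by (unfold z in *; lra). rewrite (Gc z t) in Kd by (unfold z in *; lra). exact Kd. }
  assert (Gt0 : G t = G 0).
  { destruct (Req_dec t 0) as [->|n]; [reflexivity|]. symmetry; apply G0; lra. }
  unfold G in Gt0.
  assert (Q0 : forall y, v1 (X s y) * v1 (X s y) + rc * rc = v1 (X s y) ^ 2 + rc ^ 2) by (intros; ring).
  rewrite !Q0 in Gt0.
  assert (P0 : 0 < v1 (X s 0) ^ 2 + rc ^ 2) by nra. assert (P1 : 0 < v1 (X s t) ^ 2 + rc ^ 2) by nra.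
  rewrite (fin (Xs s 0) (Xs s t) _ _ eps P0 P1 Gt0). reflexivity.
Qed.
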